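(* Let $\theta$ be a random variable with a continuous distribution, let $u(q,\theta)$ be strictly concave and monotone increasing in $q$ for every $\theta$, with marginal utility $\mu(q,\theta)=\partial u(q,\theta)/\partial q$ (so $\mu>0$ and $\partial\mu/\partial q<0$). Let $\pi_0>0$, $\pi_2>0$, and let $\phi:\mathbb{R}\to\mathbb{R}$ be a penalty function with $\phi(0)=\phi'(0)=0$, $\phi(x)=\phi(-x)$ for all $x$, and $\phi''(x)>0$ for all $x$. For a baseline report $f\in\mathbb{R}$ define $q^a(\theta)=\arg\min_q\{\pi_0 q-u(q,\theta)\}$, $q^b(f,\theta)=\arg\min_q\{\pi_0 q-u(q,\theta)+\phi(f-q)\}$, $q^c(\theta)=\arg\min_q\{\pi_0 q-u(q,\theta)-\pi_2(f-q)\}$. Then for every $\theta$: (i) $q^c(\theta)<q^a(\theta)$, and (ii) either $q^a(\theta)<q^b(f,\theta)<f$ or $f<q^b(f,\theta)<q^a(\theta)$.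
   Context: $q^a$ is the consumption of a consumer not participating in the demand response program, $q^b$ the consumption of a participating consumer who is not called (and is penalized by $\phi$ for deviating from its reported baseline $f$), and $q^c$ the consumption of a participating consumer who is called and rewarded $\pi_2$ per unit reduction below $f$. The minimizers are characterized by the first-order conditions $\pi_0=\mu(q^a,\theta)$, $\pi_0-\mu(q^b,\theta)-\phi'(f-q^b)=0$, and $\pi_0+\pi_2=\mu(q^c,\theta)$. *)

(* Defs.v *)
From Stdlib Require Export Reals.
Open Scope R_scope.

Definition strictly_concave (g : R -> R) : Prop :=
  forall x y t, x <> y -> 0 < t < 1 ->
    t * g x + (1 - t) * g y < g (t * x + (1 - t) * y).

Definition strictly_increasing (g : R -> R) : Prop :=
  forall x y, x < y -> g x < g y.

Definition is_argmin (g : R -> R) (q : R) : Prop :=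
  forall q', g q <= g q'.

(* Main.v *)
Require Import Defs.
From Stdlib Require Import Reals Lra.
Open Scope R_scope.

Lemma min_deriv0 (F : R -> R) c l :
  derivable_pt_lim F c l -> (forall x, F c <= F x) -> l = 0.
Proof.
  intros H Hm.
  pose (pr := exist (fun l => derivable_pt_lim F c l) l H : derivable_pt F c).
  assert (E := deriv_minimum F (c-1) (c+1) c pr ltac:(lra) ltac:(lra) (fun x _ _ => Hm x)).
  exact E.
Qed.

Lemma incr_of_deriv (F F' : R -> R) :
  (forall x, derivable_pt_lim F x (F' x)) -> (forall x, 0 < F' x) ->
  forall a b, a < b -> F a < F b.
Proof.
  intros H Hp a b Hab.
  pose (pr := fun x => exist (fun l => derivable_pt_lim F x l) (F' x) (H x) : derivable_pt F x).
  destruct (MVT_cor1 F a b pr Hab) as [c [Hc _]].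
  simpl in Hc. assert (0 < F' c * (b - a)) by (apply Rmult_lt_0_compat; [apply Hp|lra]).
  lra.
Qed.

Theorem lemma1
  (u mu dmu : R -> R -> R) (pi0 pi2 : R) (phi phi1 phi2 : R -> R)
  (f theta qa qb qc : R)
  (* utility: strictly concave, increasing, marginal utility mu > 0, dmu/dq < 0 *)
  (Hconc : forall th, strictly_concave (fun q => u q th))
  (Hincr : forall th, strictly_increasing (fun q => u q th))
  (Hmu : forall th q, derivable_pt_lim (fun q => u q th) q (mu q th))
  (Hmu_pos : forall th q, 0 < mu q th)
  (Hdmu : forall th q, derivable_pt_lim (fun q => mu q th) q (dmu q th))
  (Hdmu_neg : forall th q, dmu q th < 0)
  (* prices *)
  (Hpi0 : 0 < pi0) (Hpi2 : 0 < pi2)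
  (* penalty function *)
  (Hphi1 : forall x, derivable_pt_lim phi x (phi1 x))
  (Hphi2 : forall x, derivable_pt_lim phi1 x (phi2 x))
  (Hphi0 : phi 0 = 0) (Hphi10 : phi1 0 = 0)
  (Hphi_even : forall x, phi x = phi (- x))
  (Hphi2_pos : forall x, 0 < phi2 x)
  (* consumptions as minimizers *)
  (Hqa : is_argmin (fun q => pi0 * q - u q theta) qa)
  (Hqb : is_argmin (fun q => pi0 * q - u q theta + phi (f - q)) qb)
  (Hqc : is_argmin (fun q => pi0 * q - u q theta - pi2 * (f - q)) qc)
  (* the baseline report differs from the non-participating consumption *)
  (Hf : f <> qa) :
  qc < qa /\ ((qa < qb /\ qb < f) \/ (f < qb /\ qb < qa)).
Proof.
  assert (Hmd : forall a b, a < b -> mu b theta < mu a theta).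
  { intros a b Hab.
    assert (K := incr_of_deriv (fun q => - mu q theta) (fun q => - dmu q theta)
      (fun x => derivable_pt_lim_opp _ _ _ (Hdmu theta x))
      (fun x => ltac:(specialize (Hdmu_neg theta x); lra)) a b Hab).
    simpl in K; lra. }
  assert (Hpi : forall a b, a < b -> phi1 a < phi1 b)
    by exact (incr_of_deriv phi1 phi2 Hphi2 Hphi2_pos).
  assert (Hlin : forall c x, derivable_pt_lim (fun q => c * q) x c).
  { intros c x. assert (E := derivable_pt_lim_scal id c x 1 (derivable_pt_lim_id x)).
    rewrite Rmult_1_r in E. exact E. }
  assert (Dfm : forall x, derivable_pt_lim (fun q => f - q) x (0 - 1)).
  { intros x. apply (derivable_pt_lim_minus (fct_cte f) id).
    apply derivable_pt_lim_const. apply derivable_pt_lim_id. }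
  assert (Ea : pi0 - mu qa theta = 0).
  { apply (min_deriv0 (fun q => pi0 * q - u q theta) qa); [|exact Hqa].
    apply (derivable_pt_lim_minus (fun q => pi0 * q) (fun q => u q theta)).
    apply Hlin. apply Hmu. }
  assert (Ec : pi0 - mu qc theta - pi2 * (0 - 1) = 0).
  { apply (min_deriv0 (fun q => pi0 * q - u q theta - pi2 * (f - q)) qc); [|exact Hqc].
    apply (derivable_pt_lim_minus (fun q => pi0 * q - u q theta) (fun q => pi2 * (f - q))).
    apply (derivable_pt_lim_minus (fun q => pi0 * q) (fun q => u q theta)).
    apply Hlin. apply Hmu.
    apply (derivable_pt_lim_scal (fun q => f - q)). apply Dfm. }
  assert (Eb : pi0 - mu qb theta + phi1 (f - qb) * (0 - 1) = 0).
  { apply (min_deriv0 (fun q => pi0 * q - u q theta + phi (f - q)) qb); [|exact Hqb].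
    apply (derivable_pt_lim_plus (fun q => pi0 * q - u q theta) (fun q => phi (f - q))).
    apply (derivable_pt_lim_minus (fun q => pi0 * q) (fun q => u q theta)).
    apply Hlin. apply Hmu.
    apply (derivable_pt_lim_comp (fun q => f - q) phi). apply Dfm. apply Hphi1. }
  split.
  { destruct (Rlt_or_le qc qa) as [H|H]; [exact H|].
    destruct (Rle_lt_or_eq_dec _ _ H) as [H'|H'].
    - specialize (Hmd _ _ H'); lra.
    - subst; lra. }
  assert (Hmono : forall a b, a <= b -> mu b theta <= mu a theta).
  { intros a b H. destruct (Rle_lt_or_eq_dec _ _ H) as [H'|H'].
    - specialize (Hmd _ _ H'); lra.
    - subst; lra. }
  assert (Hpm : forall a b, a <= b -> phi1 a <= phi1 b).
  { intros a b H. destruct (Rle_lt_or_eq_dec _ _ H) as [H'|H'].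
    - specialize (Hpi _ _ H'); lra.
    - subst; lra. }
  destruct (Rlt_or_le qa f) as [Hl|Hl].
  - left.
    assert (Hb : qb < f).
    { destruct (Rlt_or_le qb f) as [h|h]; [exact h|].
      assert (phi1 (f - qb) <= 0) by (rewrite <- Hphi10; apply Hpm; lra).
      assert (mu qb theta >= mu qa theta) by lra.
      destruct (Rlt_or_le qa qb) as [h2|h2]; [specialize (Hmd _ _ h2); lra| lra]. }
    split; [|exact Hb].
    assert (0 < phi1 (f - qb)) by (rewrite <- Hphi10; apply Hpi; lra).
    destruct (Rlt_or_le qa qb) as [h2|h2]; [exact h2|].
    specialize (Hmono _ _ h2). lra.
  - right. assert (Hl' : f < qa) by (destruct (Rle_lt_or_eq_dec _ _ Hl); [auto|congruence]).
    assert (Hb : f < qb).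
    { destruct (Rlt_or_le f qb) as [h|h]; [exact h|].
      assert (0 <= phi1 (f - qb)) by (rewrite <- Hphi10; apply Hpm; lra).
      assert (mu qb theta <= mu qa theta) by lra.
      destruct (Rlt_or_le qb qa) as [h2|h2]; [specialize (Hmd _ _ h2); lra| lra]. }
    split; [exact Hb|].
    assert (phi1 (f - qb) < 0) by (rewrite <- Hphi10; apply Hpi; lra).
    destruct (Rlt_or_le qb qa) as [h2|h2]; [exact h2|].
    specialize (Hmono _ _ h2). lra.
Qed.
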